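(* Let $q$ be a prime power and let $\mathrm{Aff}(\mathbb{F}_q)$ be the affine group. Let $A\subseteq \mathrm{Aff}(\mathbb{F}_q)$ be a set and let $\Gamma\subseteq \mathrm{Aff}(\mathbb{F}_q)$ be a subgroup such that for every non-trivial multiplicative character $\chi$ of $\mathbb{F}_q^*$ there is $\gamma=(a,b)\in\Gamma$ with $\chi(a)\neq 1$. Let $z\in \mathrm{Aff}(\mathbb{F}_q)$ be arbitrary and let $n\ge 1$ be an integer such that $|A|^n|\Gamma|^2 > q^{n+2}(q-1)^2$. Then $A^n\cap z\Gamma\neq\emptyset$ and $A^n\cap \Gamma z\neq\emptyset$.
   Context: $\mathrm{Aff}(\mathbb{F}_q)$ is the group of matrices $\begin{pmatrix} a & b\\ 0 & 1\end{pmatrix}$ with $a\in\mathbb{F}_q^*=\mathbb{F}_q\setminus\{0\}$, $b\in\mathbb{F}_q$, under matrix multiplication; such an element is written $(a,b)$. For a set $A$ in a group, $A^n=\{a_1\cdots a_n : a_i\in A\}$, and $z\Gamma=\{z\gamma:\gamma\in\Gamma\}$, $\Gamma z=\{\gamma z:\gamma\in\Gamma\}$. *)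

(* Defs.v *)
From HB Require Import structures.
From mathcomp Require Import all_boot all_order all_algebra all_fingroup all_field.
Set Implicit Arguments. Unset Strict Implicit. Unset Printing Implicit Defensive.
Import GRing.Theory.

(* The affine group Aff(F_q), realised literally as the group of invertible
   2x2 matrices [[a, b], [0, 1]] inside GL_2(F).  The element (a, b) has
   a = g 0 0 (a nonzero) and b = g 0 1. *)
Definition Aff (F : finFieldType) : {set {'GL_ 2[F]}} :=
  [set g : {'GL_ 2[F]} | (GLval g 1%R 0%R == 0%R) && (GLval g 1%R 1%R == 1%R)].

Definition aff_a (F : finFieldType) (g : {'GL_ 2[F]}) : F := GLval g 0%R 0%R.

Fixpoint setpow (gT : finGroupType) (A : {set gT}) (n : nat) : {set gT} :=
  match n with
  | 0 => [set 1%g]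
  | n'.+1 => (setpow A n' * A)%g
  end.

Definition mult_char (F : finFieldType) (chi : {unit F} -> algC) : Prop :=
  chi 1%g = 1%R /\ forall u v : {unit F}, chi (u * v)%g = (chi u * chi v)%R.

Definition nontrivial_char (F : finFieldType) (chi : {unit F} -> algC) : Prop :=
  exists u : {unit F}, chi u <> 1%R.

(* Main.v *)
Require Import Defs.
From HB Require Import structures.
From mathcomp Require Import all_boot all_order all_algebra all_fingroup all_field all_character.
From mathcomp Require Import ring lra zify.
Set Implicit Arguments. Unset Strict Implicit. Unset Printing Implicit Defensive.
Import Order.TTheory GRing.Theory Num.Theory.
Local Open Scope ring_scope.

Lemma cauchy_schwarz (R : realDomainType) (I : finType) (a b : I -> R) :
  (\sum_i a i * b i) ^+ 2 <= (\sum_i a i ^+ 2) * (\sum_i b i ^+ 2).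
Proof.
have H : 0 <= \sum_i \sum_j (a i * b j - a j * b i) ^+ 2.
  by apply: sumr_ge0 => i _; apply: sumr_ge0 => j _; apply: sqr_ge0.
have E : \sum_i \sum_j (a i * b j - a j * b i) ^+ 2 =
   \sum_i \sum_j (a i ^+ 2 * b j ^+ 2) + \sum_i \sum_j (b i ^+ 2 * a j ^+ 2)
   - (\sum_i \sum_j ((a i * b i) * (a j * b j))) *+ 2.
  rewrite -sumrMnl -big_split -sumrB; apply: eq_bigr => i _.
  rewrite -sumrMnl -big_split -sumrB; apply: eq_bigr => j _; rewrite /=; ring.
move: H; rewrite E -!big_distrlr /= -expr2 => H.
rewrite -subr_ge0; lra.
Qed.

Section Aff.
Variable F : finFieldType.
Implicit Types g h : {'GL_ 2[F]}.

Definition act g (x : F) : F := GLval g 0 0 * x + GLval g 0 1.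

Lemma inAff g : (g \in Aff F) = (GLval g 1 0 == 0) && (GLval g 1 1 == 1).
Proof. by rewrite inE. Qed.

Lemma mul2E (M N : 'M[F]_2) i j : (M *m N) i j = M i 0 * N 0 j + M i 1 * N 1 j.
Proof.
rewrite mxE !big_ord_recl big_ord0 addr0.
by have -> : lift ord0 ord0 = 1 :> 'I_2 by apply: val_inj.
Qed.

Lemma Aff_mulE g h : g \in Aff F -> h \in Aff F ->
  [/\ GLval (g * h)%g 0 0 = GLval g 0 0 * GLval h 0 0,
      GLval (g * h)%g 0 1 = GLval g 0 0 * GLval h 0 1 + GLval g 0 1,
      GLval (g * h)%g 1 0 = 0 & GLval (g * h)%g 1 1 = 1].
Proof.
rewrite !inAff => /andP[/eqP g10 /eqP g11] /andP[/eqP h10 /eqP h11].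
rewrite !GL_MxE !mul2E g10 g11 h10 h11.
split; ring.
Qed.

Lemma Aff_mul g h : g \in Aff F -> h \in Aff F -> (g * h)%g \in Aff F.
Proof. by move=> Hg Hh; case: (Aff_mulE Hg Hh) => _ _ a b; rewrite inAff a b !eqxx. Qed.

Lemma Aff_inv_entries g : g \in Aff F ->
  GLval g 0 0 != 0 /\ (g^-1)%g \in Aff F.
Proof.
rewrite inAff => /andP[/eqP g10 /eqP g11].
have E : (GLval (g^-1)%g *m GLval g) = 1%:M by rewrite -GL_MxE mulVg.
have E00 := congr1 (fun M : 'M[F]_2 => M 0 0) E.
have E10 := congr1 (fun M : 'M[F]_2 => M 1 0) E.
have E11 := congr1 (fun M : 'M[F]_2 => M 1 1) E.
move: E00 E10 E11 => /=; rewrite !mul2E !mxE g10 g11 /= !mulr0 !addr0 !mulr1.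
move=> E00 E10 E11; split.
  by apply/eqP => g0; move: E00; rewrite g0 mulr0 => /eqP; rewrite eq_sym oner_eq0.
have g0 : GLval g 0 0 != 0.
  by apply/eqP => g0; move: E00; rewrite g0 mulr0 => /eqP; rewrite eq_sym oner_eq0.
have x10 : GLval (g^-1)%g 1 0 = 0.
  by apply/eqP; move: E10 => /eqP; rewrite mulf_eq0 (negbTE g0) orbF.
rewrite inAff x10 eqxx /=; move: E11; rewrite x10 mul0r add0r => ->; by [].
Qed.

Lemma Aff_a_neq0 g : g \in Aff F -> GLval g 0 0 != 0.
Proof. by case/Aff_inv_entries. Qed.

Lemma Aff_inv g : g \in Aff F -> (g^-1)%g \in Aff F.
Proof. by case/Aff_inv_entries. Qed.

Lemma ord2P (i : 'I_2) : i = 0 \/ i = 1.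
Proof. by case: i => [[|[|//]] Hi]; [left|right]; apply: val_inj. Qed.

Lemma Aff_eq g h : g \in Aff F -> h \in Aff F ->
  GLval g 0 0 = GLval h 0 0 -> GLval g 0 1 = GLval h 0 1 -> g = h.
Proof.
rewrite !inAff => /andP[/eqP g10 /eqP g11] /andP[/eqP h10 /eqP h11] e0 e1.
apply: val_inj; apply/matrixP => i j.
by case: (ord2P i) => ->; case: (ord2P j) => -> /=; rewrite ?g10 ?g11 ?h10 ?h11.
Qed.

Lemma act_mul g h x : g \in Aff F -> h \in Aff F ->
  act (g * h)%g x = act g (act h x).
Proof.
move=> Hg Hh; case: (Aff_mulE Hg Hh) => a b _ _; rewrite /act a b; ring.
Qed.

Lemma act_inj g x y : g \in Aff F -> act g x = act g y -> x = y.
Proof.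
move=> /Aff_a_neq0 g0; rewrite /act => /addIr; exact: mulfI.
Qed.

Lemma act_injective g : g \in Aff F -> injective (act g).
Proof. by move=> Hg x y; apply: act_inj. Qed.

Lemma act1 x : act 1%g x = x.
Proof. by rewrite /act GL_1E !mxE /= mul1r addr0. Qed.

Lemma Aff1 : (1%g : {'GL_2[F]}) \in Aff F.
Proof. by rewrite inAff GL_1E !mxE !eqxx. Qed.

Lemma act_inv g x : g \in Aff F -> act (g^-1)%g (act g x) = x.
Proof. by move=> Hg; rewrite -act_mul ?Aff_inv // mulVg act1. Qed.

Lemma fix_le1 g h x y : g \in Aff F -> h \in Aff F -> g != h ->
  act g x = act h x -> act g y = act h y -> x = y.
Proof.
move=> Hg Hh gh; rewrite /act => ex ey; apply/eqP; move: gh; apply: contraNT => xy.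
have xy' : x - y != 0 by rewrite subr_eq0.
have e0 : GLval g 0 0 = GLval h 0 0.
  have : (GLval g 0 0 - GLval h 0 0) * (x - y) = 0.
    have -> : (GLval g 0 0 - GLval h 0 0) * (x - y) =
      (GLval g 0 0 * x + GLval g 0 1 - (GLval h 0 0 * x + GLval h 0 1)) -
      (GLval g 0 0 * y + GLval g 0 1 - (GLval h 0 0 * y + GLval h 0 1)) by ring.
    by rewrite ex ey !subrr.
  move/eqP; rewrite mulf_eq0 (negbTE xy') orbF subr_eq0.
  by move/eqP.
apply/eqP; apply: Aff_eq => //.
by move: ex; rewrite e0 => /addrI.
Qed.

Variable A : {set {'GL_2[F]}}.
Hypothesis HA : A \subset Aff F.

Local Notation q := (#|F|%:R : rat).
Local Notation k := (#|A|%:R : rat).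

Definition T (v : F -> rat) (x : F) : rat := \sum_(a in A) v (act a x).

Lemma setpow_Aff n : setpow A n \subset Aff F.
Proof.
elim: n => [|n IH] /=; first by rewrite sub1set Aff1.
apply/subsetP => g /mulsgP[h a Hh Ha ->].
by apply: Aff_mul; [apply: (subsetP IH) | apply: (subsetP HA)].
Qed.

Lemma T_exists n v x : iter n T v x != 0 ->
  exists2 g, g \in setpow A n & v (act g x) != 0.
Proof.
elim: n x => [|n IH] x /=.
  by move=> H; exists 1%g; rewrite ?inE ?act1.
rewrite /T => H.
have [a Ha Hn] : exists2 a, a \in A & iter n T v (act a x) != 0.
  apply/exists_inP; move: H; apply: contraR; rewrite negb_exists_in => /forall_inP H.
  by apply/eqP; apply: big1 => a /H /negPn /eqP.
case: (IH _ Hn) => g Hg Hv; exists (g * a)%g; first exact: mem_mulg.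
rewrite act_mul //; [exact: (subsetP (setpow_Aff n)) | exact: (subsetP HA)].
Qed.

Lemma eq_T u u' : u =1 u' -> T u =1 T u'.
Proof. by move=> E x; apply: eq_bigr => a _; rewrite E. Qed.

Lemma T_affine (c d : rat) v : T (fun t => c * v t - d) =1 (fun x => c * T v x - d * k).
Proof.
move=> x; rewrite /T sumrB -mulr_sumr; congr (_ - _).
by rewrite sumr_const mulr_natr.
Qed.

Lemma iter_T_affine n (c d : rat) v x :
  iter n T (fun t => c * v t - d) x = c * iter n T v x - d * k ^+ n.
Proof.
elim: n x => [|n IH] x /=; first by rewrite expr0 mulr1.
rewrite (eq_T IH) T_affine; congr (_ - _); rewrite exprS; ring.
Qed.

Lemma sum_T v : \sum_x T v x = k * \sum_x v x.
Proof.
rewrite /T exchange_big /= mulr_natl -sumr_const.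
apply: eq_bigr => a Ha.
by rewrite [RHS](reindex_inj (act_injective (subsetP HA a Ha))).
Qed.

Definition N x t : rat := \sum_(a in A) (if t == act a x then 1 else 0).

Lemma N_v x v : \sum_t N x t * v t = T v x.
Proof.
rewrite /N /T; under eq_bigr => t _ do rewrite mulr_suml.
rewrite exchange_big /=; apply: eq_bigr => a _.
transitivity (\sum_t (if t == act a x then v t else 0)).
  by apply: eq_bigr => t _; case: ifP; rewrite ?mul1r ?mul0r.
by rewrite -big_mkcond big_pred1_eq.
Qed.

Lemma sum_N x : \sum_t N x t = k.
Proof.
transitivity (\sum_t N x t * 1); first by apply: eq_bigr => t _; rewrite mulr1.
by rewrite N_v /T sumr_const.
Qed.

Lemma qT x v : \sum_t v t = 0 -> q * T v x = \sum_t (q * N x t - k) * v t.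
Proof.
move=> H; rewrite -N_v mulr_sumr.
transitivity (\sum_t (q * (N x t * v t)) - k * \sum_t v t); first by rewrite H mulr0 subr0.
rewrite mulr_sumr -sumrB; apply: eq_bigr => t _; ring.
Qed.

Lemma fix_count a a' : a \in A -> a' \in A ->
  \sum_x (if act a x == act a' x then 1 else 0 : rat) <= (if a == a' then q else 0) + 1.
Proof.
move=> Ha Ha'; have HAa := subsetP HA a Ha; have HAa' := subsetP HA a' Ha'.
case: eqP => [<-|ne].
  rewrite (eq_bigr (fun _ => 1)) => [|x _]; last by rewrite eqxx.
  by rewrite sumr_const lerDl.
rewrite add0r; case: (pickP (fun x => act a x == act a' x)) => [x0 Hx0|none].
  have E : forall x, (if act a x == act a' x then 1 else 0 : rat) = (if x == x0 then 1 else 0).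
    move=> x; case: (x =P x0) => [->|nx]; first by rewrite Hx0.
    case: eqP => // e; exfalso; apply: nx.
    by apply: (fix_le1 HAa HAa') => //; [apply/eqP | apply/eqP].
  by rewrite (eq_bigr _ (fun x _ => E x)) -big_mkcond big_pred1_eq.
rewrite big1 ?ler01 // => x _; by rewrite none.
Qed.

Lemma sumN2 : \sum_x \sum_t N x t ^+ 2 <= q * k + k ^+ 2.
Proof.
have E : forall x, \sum_t N x t ^+ 2 =
   \sum_(a in A) \sum_(a' in A) (if act a x == act a' x then 1 else 0).
  move=> x; rewrite /N; under eq_bigr => t _ do rewrite expr2 big_distrlr /=.
  rewrite exchange_big /=; apply: eq_bigr => a _.
  rewrite exchange_big /=; apply: eq_bigr => a' _.
  transitivity (\sum_t (if t == act a x then (if t == act a' x then 1 else 0) else 0 : rat)).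
    by apply: eq_bigr => t _; case: ifP; case: ifP; rewrite ?mul1r ?mul0r.
  rewrite -big_mkcond big_pred1_eq; by rewrite eq_sym.
under eq_bigr => x _ do rewrite E.
rewrite exchange_big /=.
apply: (@le_trans _ _ (\sum_(a in A) \sum_(a' in A) ((if a == a' then q else 0) + 1))).
  apply: ler_sum => a Ha; rewrite exchange_big /=; apply: ler_sum => a' Ha'.
  exact: fix_count.
have E2 : forall a, a \in A -> \sum_(a' in A) ((if a == a' then q else 0) + 1) = q + k.
  move=> a Ha; rewrite big_split /= sumr_const; congr (_ + _).
  rewrite (bigD1 a) //= eqxx big1 ?addr0 // => a' /andP[_ ne].
  by rewrite eq_sym (negbTE ne).
rewrite (eq_bigr _ E2) sumr_const -mulr_natr; lra.
Qed.

Lemma T_norm v : \sum_t v t = 0 ->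
  \sum_x (T v x) ^+ 2 <= q * k * \sum_x v x ^+ 2.
Proof.
move=> Hv.
have qpos : 0 < q.
  by rewrite ltr0n; apply/card_gt0P; exists 0.
have M2 : forall x, \sum_t (q * N x t - k) ^+ 2 = q ^+ 2 * \sum_t N x t ^+ 2 - q * k ^+ 2.
  move=> x.
  transitivity (\sum_t (q ^+ 2 * N x t ^+ 2 - (q * k *+ 2) * N x t + k ^+ 2)).
    by apply: eq_bigr => t _; ring.
  rewrite big_split sumrB /= -!mulr_sumr sum_N sumr_const -mulr_natr; ring.
have L : q ^+ 2 * \sum_x (T v x) ^+ 2 <= q ^+ 2 * (q * k * \sum_x v x ^+ 2).
  rewrite mulr_sumr.
  apply: (@le_trans _ _ (\sum_x (\sum_t (q * N x t - k) ^+ 2) * \sum_t v t ^+ 2)).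
    apply: ler_sum => x _; rewrite -exprMn qT //; exact: cauchy_schwarz.
  rewrite -mulr_suml; under eq_bigr => x _ do rewrite M2.
  rewrite sumrB -mulr_sumr sumr_const.
  have -> : q * k ^+ 2 *+ #|F| = q * k ^+ 2 * q by rewrite mulr_natr.
  have S0 : 0 <= \sum_x v x ^+ 2 by apply: sumr_ge0 => x _; apply: sqr_ge0.
  have HN := sumN2.
  set SN := \sum_x \sum_t N x t ^+ 2; set V := \sum_x v x ^+ 2.
  have P : 0 <= q ^+ 2 * (q * k + k ^+ 2 - SN) * V.
    by apply: mulr_ge0 => //; apply: mulr_ge0; [apply: sqr_ge0 | rewrite subr_ge0].
  rewrite -subr_ge0; apply: (le_trans P); rewrite le_eqVlt; apply/orP; left; apply/eqP.
  ring.
by move: L; rewrite ler_pM2l // exprn_gt0.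
Qed.

Lemma iter_norm n w : \sum_t w t = 0 ->
  \sum_t iter n T w t = 0 /\
  \sum_x (iter n T w x) ^+ 2 <= (q * k) ^+ n * \sum_x w x ^+ 2.
Proof.
move=> Hw; elim: n => [|n [IH1 IH2]] /=; first by rewrite expr0 mul1r.
split; first by rewrite sum_T IH1 mulr0.
apply: (le_trans (T_norm IH1)); rewrite exprS -[leRHS]mulrA.
apply: ler_wpM2l => //; apply: mulr_ge0; exact: ler0n.
Qed.

Lemma reach n x y : (#|F| ^ (n + 2) < #|A| ^ n)%N ->
  exists2 g, g \in setpow A n & act g x = y.
Proof.
move=> Hn.
pose d := fun t : F => (if t == y then 1 else 0 : rat).
pose w := fun t => q * d t - 1.
have Sd : \sum_t d t = 1 by rewrite /d -big_mkcond big_pred1_eq.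
have Sw : \sum_t w t = 0.
  by rewrite /w sumrB -mulr_sumr Sd mulr1 sumr_const subrr.
have Sw2 : \sum_t w t ^+ 2 <= q ^+ 2 - q.
  apply: (@le_trans _ _ (\sum_t ((q ^+ 2 - q *+ 2) * d t + 1))).
    apply: ler_sum => t _; rewrite /w /d; case: (t == y).
      by rewrite le_eqVlt; apply/orP; left; apply/eqP; ring.
    by rewrite !mulr0 !add0r sqrrN expr1n.
  rewrite big_split /= -mulr_sumr Sd sumr_const mulr1.
  by rewrite le_eqVlt; apply/orP; left; apply/eqP; rewrite -[1 *+ #|F|]/q; ring.
case: (boolP (iter n T d x == 0)) => [/eqP H0|]; last first.
  move/T_exists => [g Hg]; rewrite /d; case: (act g x =P y) => [e _|_]; [by exists g | by rewrite eqxx].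
exfalso.
have Ex : iter n T w x = - k ^+ n.
  by rewrite /w iter_T_affine H0 mulr0 mul1r sub0r.
have [_ Nw] := iter_norm n Sw.
have single : (iter n T w x) ^+ 2 <= \sum_x0 (iter n T w x0) ^+ 2.
  rewrite (bigD1 x) //= lerDl; apply: sumr_ge0 => t _; exact: sqr_ge0.
have Hn' : q ^+ (n + 2) < k ^+ n by rewrite -!natrX ltr_nat.
move: single; rewrite Ex sqrrN => single.
have H := le_trans single (le_trans Nw (ler_wpM2l _ Sw2)).
move: Hn' H; rewrite exprMn exprD; set K := k ^+ n; set Q := q ^+ n => Hn' H.
have Qpos : 0 < Q by rewrite exprn_gt0 // ltr0n; apply/card_gt0P; exists 0.
have qge1 : 1 <= q by rewrite ler1n; apply/card_gt0P; exists 0.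
have Kpos : 0 < K.
  apply: le_lt_trans Hn'; apply: mulr_ge0; [exact: ltW | apply: sqr_ge0].
have {}H := H (ltW (mulr_gt0 Qpos Kpos)).
set qq := (#|F|%:R : rat) in Hn' H qge1.
have h1 : K * (Q * qq ^+ 2) < K * K by rewrite ltr_pM2l.
have h2 : 0 <= Q * K * qq by apply: mulr_ge0; [apply: ltW; exact: mulr_gt0 | lra].
move: H; rewrite expr2 => H.
have : K * K <= K * (Q * qq ^+ 2) - Q * K * qq.
  apply: (le_trans H); rewrite le_eqVlt; apply/orP; left; apply/eqP; ring.
lra.
Qed.

End Aff.
Lemma units_abelian (F : finFieldType) : abelian [set: {unit F}].
Proof. by apply/centsP => x _ y _; apply: val_inj; rewrite /= mulrC. Qed.

Lemma exists_char (F : finFieldType) (H : {group {unit F}}) (u0 : {unit F}) :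
  u0 \notin H -> exists chi : {unit F} -> algC,
    [/\ mult_char chi, nontrivial_char chi & forall h, h \in H -> chi h = 1].
Proof.
move=> u0H.
have nH : (H <| [set: {unit F}]%G)%g by rewrite -sub_abelian_normal ?units_abelian ?subsetT.
have := cap_cfker_normal nH => E.
case: (boolP [exists i : Iirr [set: {unit F}]%G,
   (H \subset cfker 'chi_i) && (u0 \notin cfker 'chi_i)]) => [/existsP[i /andP[Hi ui]] | none].
  have lin : 'chi_i \is a linear_char by apply/char_abelianP/units_abelian.
  exists (fun u => 'chi_i u); split.
  - split; first exact: lin_char1.
    by move=> u v; apply: lin_charM; rewrite ?inE.
  - exists u0; move: ui; rewrite cfkerEirr inE lin_char1 //; by move/eqP.
  - move=> h /(subsetP Hi); rewrite cfkerEirr inE => /eqP ->; exact: lin_char1.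
exfalso; move/negP: u0H; apply; rewrite -E; apply/bigcapP => i Hi.
move: none; rewrite negb_exists => /forallP /(_ i); rewrite Hi /= negbK; by [].
Qed.

Lemma a_one (F : finFieldType) (x y : {'GL_2[F]}) : x \in Aff F -> y \in Aff F ->
  GLval x 0 0 = GLval y 0 0 -> GLval (x^-1 * y)%g 0 0 = 1.
Proof.
move=> Hx Hy e.
have Hr : (x^-1 * y)%g \in Aff F by apply: Aff_mul => //; apply: Aff_inv.
have := Aff_mulE Hx Hr; rewrite mulKVg => -[e0 _ _ _].
apply: (mulfI (Aff_a_neq0 Hx)); by rewrite mulr1 -e0 e.
Qed.

Lemma act_invr (F : finFieldType) (g : {'GL_2[F]}) x : g \in Aff F -> act g (act (g^-1)%g x) = x.
Proof. by move=> Hg; rewrite -act_mul ?Aff_inv // mulgV act1. Qed.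

Lemma aff_one (F : finFieldType) (g : {'GL_2[F]}) : g \in Aff F ->
  GLval g 0 0 = 1 -> GLval g 0 1 = 0 -> g = 1%g.
Proof. by move=> Hg e0 e1; apply: Aff_eq => //; [apply: Aff1 | rewrite GL_1E !mxE ..]. Qed.

Lemma char_surj (F : finFieldType) (G : {group {'GL_2[F]}}) :
  G \subset Aff F ->
  (forall chi : {unit F} -> algC, mult_char chi -> nontrivial_char chi ->
     exists2 g, g \in G & exists u : {unit F}, val u = aff_a g /\ chi u <> 1%R) ->
  forall c : F, c != 0 -> exists2 g, g \in G & GLval g 0 0 = c.
Proof.
move=> HG Hchi c c0.
pose Hs := [set u : {unit F} | [exists g in G, val u == aff_a g]].
have Hgrp : group_set Hs.
  apply/group_setP; split.
    rewrite inE; apply/exists_inP; exists 1%g => //; by rewrite /aff_a GL_1E mxE.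
  move=> u v; rewrite !inE => /exists_inP[g Hg /eqP eu] /exists_inP[h Hh /eqP ev].
  apply/exists_inP; exists (g * h)%g; first exact: groupM.
  have [e0 _ _ _] := Aff_mulE (subsetP HG g Hg) (subsetP HG h Hh).
  by rewrite /aff_a e0 -/(aff_a g) -/(aff_a h) -eu -ev.
pose H := Group Hgrp.
have cu : c \is a GRing.unit by rewrite unitfE.
pose u : {unit F} := Sub c cu.
case: (boolP (u \in H)) => [|uH].
  rewrite inE => /exists_inP[g Hg /eqP e]; by exists g.
have [chi [mc nc Hk]] := exists_char uH.
have [g Hg [u' [e' ne]]] := Hchi chi mc nc.
exfalso; apply: ne; apply: Hk; rewrite inE; apply/exists_inP; exists g => //; exact/eqP.
Qed.

Lemma act_transl (F : finFieldType) (g : {'GL_2[F]}) x : g \in Aff F -> GLval g 0 0 = 1 ->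
  act g x = x + GLval g 0 1.
Proof. by move=> _ e; rewrite /act e mul1r. Qed.

Lemma aff_eq_act (F : finFieldType) (g h : {'GL_2[F]}) : g \in Aff F -> h \in Aff F ->
  (forall x, act g x = act h x) -> g = h.
Proof.
move=> Hg Hh E; have E0 := E 0; have E1 := E 1; move: E0 E1; rewrite /act !mulr0 !add0r !mulr1 => e0 e1.
by apply: Aff_eq => //; move: e1; rewrite e0 => /addIr.
Qed.

Lemma Gamma_full (F : finFieldType) (G : {group {'GL_2[F]}}) :
  G \subset Aff F ->
  (forall c : F, c != 0 -> exists2 g, g \in G & GLval g 0 0 = c) ->
  forall t, t \in G -> GLval t 0 0 = 1 -> t != 1%g -> Aff F \subset G.
Proof.
move=> HG surj t Ht t0 t1.
have HtA := subsetP HG t Ht.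
have b0 : GLval t 0 1 != 0.
  by apply: contra t1 => /eqP b; apply/eqP; apply: aff_one.
apply/subsetP => g Hg.
have [ga Hga ea] := surj _ (Aff_a_neq0 Hg).
have HgaA := subsetP HG ga Hga.
pose r := (ga^-1 * g)%g.
have Hr : r \in Aff F by apply: Aff_mul => //; apply: Aff_inv.
have r0 : GLval r 0 0 = 1 by apply: a_one.
suff rG : r \in G by have := groupM Hga rG; rewrite /r mulKVg.
case: (eqVneq (GLval r 0 1) 0) => [r1|r1].
  by rewrite (aff_one Hr r0 r1) group1.
have dn0 : GLval r 0 1 / GLval t 0 1 != 0 by rewrite mulf_neq0 ?invr_eq0.
have [d Hd ed] := surj _ dn0.
have HdA := subsetP HG d Hd.
have -> : r = (d * t * d^-1)%g.
  apply: aff_eq_act => //; first by repeat apply: Aff_mul => //; apply: Aff_inv.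
  move=> x; rewrite (act_transl _ Hr r0) act_mul ?Aff_inv ?Aff_mul // act_mul //.
  rewrite (act_transl _ HtA t0).
  have -> : act d (act d^-1 x + GLval t 0 1) = act d (act d^-1 x) + GLval d 0 0 * GLval t 0 1.
    by rewrite /act; ring.
  by rewrite act_invr // ed divfK.
by rewrite !groupM ?groupV.
Qed.

Lemma exists_x0 (F : finFieldType) (G : {group {'GL_2[F]}}) :
  G \subset Aff F ->
  (forall c : F, c != 0 -> exists2 g, g \in G & GLval g 0 0 = c) ->
  (forall t, t \in G -> GLval t 0 0 = 1 -> t = 1%g) ->
  exists x0, forall g, g \in Aff F -> act g x0 = x0 -> g \in G.
Proof.
move=> HG surj K1.
case: (boolP [exists gam in G, GLval gam 0 0 != 1]) => [/exists_inP[gam Hgam gn1]|none].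
  have HgamA := subsetP HG gam Hgam.
  pose x0 := GLval gam 0 1 / (1 - GLval gam 0 0).
  have d0 : 1 - GLval gam 0 0 != 0 by rewrite subr_eq0 eq_sym.
  have fx : act gam x0 = x0.
    rewrite /act /x0; field; exact: d0.
  have fixall : forall d, d \in G -> act d x0 = x0.
    move=> d Hd; have HdA := subsetP HG d Hd.
    have comm : (gam * d = d * gam)%g.
      have c1 : ((d * gam)^-1 * (gam * d))%g = 1%g.
        apply: K1; first by apply: groupM; [rewrite groupV|]; apply: groupM.
        apply: (@a_one _ (d * gam)%g (gam * d)%g); try by apply: Aff_mul.
        have [e1 _ _ _] := Aff_mulE HdA HgamA; have [e2 _ _ _] := Aff_mulE HgamA HdA.
        by rewrite e1 e2 mulrC.
      by apply: (mulgI (d * gam)^-1)%g; rewrite c1 mulVg.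
    have gn : gam != 1%g by apply: contra gn1 => /eqP ->; rewrite GL_1E mxE.
    apply: (@fix_le1 _ gam 1%g (act d x0) x0 HgamA (Aff1 F) gn); last by rewrite act1.
    by rewrite act1 -act_mul // comm act_mul // fx.
  exists x0 => g Hg fg.
  have [d Hd ed] := surj _ (Aff_a_neq0 Hg).
  have HdA := subsetP HG d Hd.
  suff -> : g = d by [].
  apply: Aff_eq => //.
  have := fixall d Hd; move: fg; rewrite /act ed => e1 e2.
  by apply: (addrI (GLval g 0 0 * x0)); rewrite e1 e2.
exists 0 => g Hg fg.
have [d Hd ed] := surj _ (Aff_a_neq0 Hg).
move: none; rewrite negb_exists_in => /forall_inP /(_ d Hd); rewrite negbK ed => /eqP g1.
by rewrite (aff_one Hg g1) ?group1 //; move: fg; rewrite /act mulr0 add0r.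
Qed.

Lemma card_G (F : finFieldType) (G : {group {'GL_2[F]}}) :
  G \subset Aff F ->
  (forall t, t \in G -> GLval t 0 0 = 1 -> t = 1%g) ->
  (#|G| <= #|F|.-1)%N.
Proof.
move=> HG K1.
have inj : {in G &, injective (fun g : {'GL_2[F]} => GLval g 0 0)}.
  move=> g h Hg Hh e.
  have := K1 _ (groupM (groupVr Hg) Hh) (a_one (subsetP HG g Hg) (subsetP HG h Hh) e).
  by move/(canRL (mulKVg g)); rewrite mulg1.
rewrite -(card_in_imset inj) -(cardsC1 (0 : F)); apply: subset_leq_card.
apply/subsetP => c /imsetP[g Hg ->]; rewrite !inE; exact: Aff_a_neq0 (subsetP HG g Hg).
Qed.

Lemma setpow_nonempty (gT : finGroupType) (A : {set gT}) n a : a \in A ->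
  exists g, g \in setpow A n.
Proof.
move=> Ha; elim: n => [|n [g Hg]] /=; first by exists 1%g; rewrite set11.
by exists (g * a)%g; apply: mem_mulg.
Qed.



Theorem corollary7 (F : finFieldType) (A : {set {'GL_ 2[F]}})
  (Gamma : {group {'GL_ 2[F]}}) (z : {'GL_ 2[F]}) (n : nat) :
  A \subset Aff F ->
  Gamma \subset Aff F ->
  (forall chi : {unit F} -> algC, mult_char chi -> nontrivial_char chi ->
     exists2 g, g \in Gamma &
       exists u : {unit F}, val u = aff_a g /\ chi u <> 1%R) ->
  z \in Aff F ->
  (1 <= n)%N ->
  (#|A| ^ n * #|Gamma| ^ 2 > #|F| ^ (n + 2) * (#|F| - 1) ^ 2)%N ->
  (setpow A n :&: (z *: Gamma)%g != set0) /\ (setpow A n :&: (Gamma :* z)%g != set0).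
Proof.
move=> HA HG Hchi Hz n1 Hineq.
have surj := char_surj HG Hchi.
have HzV := Aff_inv Hz.
case: (boolP [exists t in Gamma, (GLval t 0 0 == 1) && (t != 1%g)]) =>
    [/exists_inP[t Ht /andP[/eqP t0 t1]] | noK].
  have full := Gamma_full HG surj Ht t0 t1.
  have Apos : (0 < #|A|)%N.
    rewrite lt0n; apply/negP => /eqP A0; move: Hineq; rewrite A0 exp0n //.
  have [a Ha] := card_gt0P Apos.
  have [g Hg] := setpow_nonempty n Ha.
  have HgA := subsetP (setpow_Aff HA n) g Hg.
  split; apply/set0Pn; exists g; rewrite inE Hg /=.
    by rewrite mem_lcoset; apply: (subsetP full); apply: Aff_mul.
  by rewrite mem_rcoset; apply: (subsetP full); apply: Aff_mul.
have K1 : forall t, t \in Gamma -> GLval t 0 0 = 1 -> t = 1%g.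
  move=> t Ht t0; move: noK; rewrite negb_exists_in => /forall_inP /(_ t Ht).
  by rewrite t0 eqxx /= negbK => /eqP.
have [x0 Hx0] := exists_x0 HG surj K1.
have cardG := card_G HG K1.
have Hq : (#|F| ^ (n + 2) < #|A| ^ n)%N.
  move: Hineq cardG; rewrite subn1.
  set X := (#|A| ^ n)%N; set Y := (#|F| ^ (n + 2))%N; set m := #|F|.-1; set c := #|Gamma|.
  move=> H1 H2; rewrite ltnNge; apply/negP => H3.
  have : (X * c ^ 2 <= Y * m ^ 2)%N by apply: leq_mul => //; rewrite leq_sqr.
  by rewrite leqNgt H1.
split; apply/set0Pn.
  have [g Hg e] := reach HA x0 (act z x0) Hq.
  have HgA := subsetP (setpow_Aff HA n) g Hg.
  exists g; rewrite inE Hg /= mem_lcoset; apply: Hx0; first exact: Aff_mul.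
  by rewrite act_mul // e act_inv.
have [g Hg e] := reach HA (act z^-1 x0) x0 Hq.
have HgA := subsetP (setpow_Aff HA n) g Hg.
exists g; rewrite inE Hg /= mem_rcoset; apply: Hx0; first exact: Aff_mul.
by rewrite act_mul.
Qed.
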